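(* Let $q$ be a prime power. Every $2$-$(n,k,\lambda)_q$ design is additive under $\mathrm{EA}(q^n)$.
   Context: A $2$-$(n,k,\lambda)_q$ design (subspace design) is a $2$-$\left(\frac{q^n-1}{q-1},\frac{q^k-1}{q-1},\lambda\right)$ design whose points are the points of $\mathrm{PG}(n-1,q)$ and whose blocks are (point sets of) certain $(k-1)$-dimensional projective subspaces of $\mathrm{PG}(n-1,q)$, such that every pair of distinct points lies in exactly $\lambda$ blocks. $\mathrm{EA}(q^n)$ denotes the elementary abelian group of order $q^n$. A design $(V,\mathscr B)$ is additive under an abelian group $G$ if there is an injective map $f:V\to G$ such that $\sum_{x\in B}f(x)=0$ for every block $B\in\mathscr B$. *)

(* Defs.v *)
From HB Require Import structures.
From mathcomp Require Import all_boot all_order all_algebra finalg.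
Set Implicit Arguments. Unset Strict Implicit. Unset Printing Implicit Defensive.
Import GRing.Theory.
Local Open Scope ring_scope.

(* Subspaces of F^n = 'rV[F]_n are {vspace 'rV[F]_n}.
   Points of PG(n-1,q): 1-dimensional subspaces.
   Blocks: k-dimensional subspaces, identified with the set of points they contain. *)

Definition is_point (F : finFieldType) (n : nat) (P : {vspace 'rV[F]_n}) : bool :=
  \dim P == 1%N.

Definition points_of (F : finFieldType) (n : nat) (B : {vspace 'rV[F]_n})
  : seq {vspace 'rV[F]_n} :=
  undup [seq <[v]>%VS | v <- enum 'rV[F]_n & (v != 0) && (v \in B)].

Definition subspace_2design (F : finFieldType) (n k lam : nat)
  (blocks : seq {vspace 'rV[F]_n}) : Prop :=
  [/\ uniq blocks,
      (forall B, B \in blocks -> \dim B = k) &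
      (forall P Q : {vspace 'rV[F]_n}, is_point P -> is_point Q -> P != Q ->
         count (fun B => (P <= B)%VS && (Q <= B)%VS) blocks = lam)].

Definition elem_abelian_of_order (G : finZmodType) (m : nat) : Prop :=
  #|G| = m /\ exists p, prime p /\ forall x : G, x *+ p = 0.

Definition additive_under (F : finFieldType) (n : nat)
  (blocks : seq {vspace 'rV[F]_n}) (G : finZmodType) : Prop :=
  exists f : {vspace 'rV[F]_n} -> G,
    {in [pred P | is_point P] &, injective f} /\
    forall B, B \in blocks -> \sum_(P <- points_of B) f P = 0.

(* Main.v *)
Require Import Defs.
From HB Require Import structures.
From mathcomp Require Import all_boot all_order all_algebra finalg.
From mathcomp Require Import all_fingroup all_solvable all_field.
Import GRing.Theory.
Local Open Scope ring_scope.

Set Implicit Arguments. Unset Strict Implicit. Unset Printing Implicit Defensive.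


Lemma ext_exists (F : finFieldType) (k : nat) : (0 < k)%N ->
  {L : splittingFieldType F | \dim {:L} = k}.
Proof.
move=> k_gt0; pose m := (#|F| ^ k)%N.
have q_gt1 : (1 < #|F|)%N by apply: finNzRing_gt1.
have m_gt1: (m > 1)%N by rewrite (ltn_exp2l 0).
have m_gt0 := ltnW m_gt1; have m1_gt0: (m.-1 > 0)%N by rewrite -ltnS prednK.
pose q (R : nzRingType) := ('X^m - 'X : {poly R}); have Dq R: q R = ('X^(m.-1) - 1) * ('X - 0).
  by rewrite subr0 mulrBl mul1r -exprSr prednK.
have /FinSplittingFieldFor[/= L splitLq]: q F != 0.
  by rewrite Dq monic_neq0 ?rpredM ?monicXsubC ?monicXnsubC.
rewrite [map_poly _ _]rmorphB rmorphXn /= map_polyX -/(q L) in splitLq.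
have [p pr_p pcharFp] := finPcharP F.
have pcharL: p \in [pchar L] by rewrite pchar_lalg.
pose Fm := FinFieldExtType L; exists L.
have /finField_galois_generator[/= a _ Da]: (1 <= {:L})%VS by apply: sub1v.
pose Em := fixedSpace (a ^+ k)%g; rewrite /order dimv1 expn1 in Da.
have{splitLq} [zs DqL defL] := splitLq.
have Uzs: uniq zs.
  rewrite -separable_prod_XsubC -(eqp_separable DqL) Dq separable_root andbC.
  rewrite /root !hornerE subr_eq0 eq_sym expr0n gtn_eqF ?oner_eq0 //=.
  rewrite cyclotomic.separable_Xn_sub_1 // -subn1 natrB // subr_eq0.
  rewrite natrX.
  have ->: (#|F|%:R : L) = 0.
    have lg: (0 < logn p #|F|)%N by rewrite -(ltn_exp2l 0 _ (prime_gt1 pr_p)) -(card_pprimeChar pcharFp).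
    by rewrite (card_pprimeChar pcharFp) natrX (pcharf0 pcharL) expr0n gtn_eqF.
  by rewrite expr0n gtn_eqF // eq_sym oner_eq0.
have cardL : #|Fm| = m.
suffices /eq_card->: Fm =i zs.
  apply: succn_inj; rewrite (card_uniqP _) //= -(size_prod_XsubC _ id).
  by rewrite -(eqp_size DqL) size_polyDl size_polyXn // size_polyN size_polyX.
have in_zs: zs =i Em.
  move=> z; rewrite -root_prod_XsubC -(eqp_root DqL) (sameP fixedSpaceP eqP).
  rewrite /root !hornerE subr_eq0 /= /m; congr (_ == z).
  elim: (k) => [|i IHi]; first by rewrite gal_id.
  by rewrite expgSr expnSr exprM IHi galM ?Da ?memvf.
suffices defEm: Em = {:L}%VS by move=> z; rewrite in_zs defEm memvf.
apply/eqP; rewrite eqEsubv subvf -defL -[Em]subfield_closed agenvS //.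
by rewrite subv_add sub1v; apply/span_subvP=> z; rewrite in_zs.
have := card_vspace (fullv : {vspace finvect_type L}).
rewrite card_vspacef.
move: cardL; rewrite /Fm /= => ->. move/eqP. rewrite eqn_exp2l //. move=> /eqP <-.
done.
Qed.

Section PowSum.
Variable F : finFieldType.
Local Notation q := #|F|.

Lemma q_gt1 : (1 < q)%N. Proof. exact: finNzRing_gt1. Qed.

Lemma natr_card : (q%:R : F) = 0.
Proof.
have [p pr_p pcharFp] := finPcharP F.
have lg: (0 < logn p #|F|)%N by rewrite -(ltn_exp2l 0 _ (prime_gt1 pr_p)) -(card_pprimeChar pcharFp) q_gt1.
by rewrite (card_pprimeChar pcharFp) natrX (pcharf0 pcharFp) expr0n gtn_eqF.
Qed.

Lemma unit_pow (c : F) : c != 0 -> c ^+ q.-1 = 1.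
Proof.
move=> c0; apply: (mulfI c0); rewrite mulr1 -exprS prednK ?expf_card //.
exact: ltnW q_gt1.
Qed.

Lemma qm1 : ((q.-1)%:R : F) = -1.
Proof.
have: ((q.-1)%:R + 1 : F) = 0 by rewrite -[1]/(1%:R) -natrD addn1 prednK ?natr_card // ltnW // q_gt1.
by move/eqP; rewrite addr_eq0 => /eqP.
Qed.

Lemma pow_sum_top : \sum_(c : F) c ^+ q.-1 = -1.
Proof.
have hq : (q.-1 == 0)%N = false by rewrite -(subnKC q_gt1).
rewrite (bigD1 0) //= expr0n hq add0r.
rewrite (eq_bigr (fun _ => 1)); last by move=> c /unit_pow.
by rewrite sumr_const cardC1 -qm1.
Qed.

Lemma pow_sum_low j : (j < q.-1)%N -> \sum_(c : F) c ^+ j = 0.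
Proof.
move=> ltj; case: j ltj => [|j] ltj.
  by rewrite (eq_bigr (fun _ => 1)) // sumr_const natr_card.
have [a a0 aj] : exists2 a : F, a != 0 & a ^+ j.+1 != 1.
  case: (pickP [pred a : F | (a != 0) && (a ^+ j.+1 != 1)]) => [a /andP[]|H]; first by exists a.
  exfalso.
  have: all (j.+1).-unity_root (enum (predC1 (0 : F))).
    apply/allP => c; rewrite mem_enum inE => c0; move: (H c) => /=; rewrite c0 /= => /negbFE.
    by rewrite unity_rootE.
  move=> /(max_unity_roots (ltn0Sn j)) /(_ (enum_uniq _)).
  by rewrite -cardE cardC1 leqNgt ltj.
set S := \sum_(c : F) _.
have HS : S = a ^+ j.+1 * S.
  rewrite /S mulr_sumr (reindex_inj (mulfI a0)) /=.
  by apply: eq_bigr => c _; rewrite exprMn.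
apply/eqP; move: HS => /eqP; rewrite -subr_eq0 -{1}[S]mul1r -mulrBl mulf_eq0 subr_eq0 eq_sym (negbTE aj) /=.
by [].
Qed.
End PowSum.

Section LineSum.
Variables (F : finFieldType) (L : fieldExtType F).
Local Notation q := #|F|.

Lemma line_sum (y z : L) : \sum_(c : F) (y + c *: z) ^+ q.-1 = - z ^+ q.-1.
Proof.
have E c : (y + c *: z) ^+ q.-1 =
   \sum_(i < q.-1.+1) c ^+ i *: ((y ^+ (q.-1 - i) * z ^+ i) *+ 'C(q.-1, i)).
  rewrite exprDn; apply: eq_bigr => i _.
  by rewrite exprZn -scalerMnr scalerAr.
rewrite (eq_bigr _ (fun c _ => E c)) exchange_big /=.
rewrite big_ord_recr /= big1 ?add0r.
  by rewrite -scaler_suml pow_sum_top subnn expr0 mul1r binn mulr1n scaleN1r.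
move=> i _; rewrite -scaler_suml pow_sum_low ?scale0r //.
Qed.
End LineSum.

Section SubSum.
Variables (F : finFieldType) (L : fieldExtType F) (n : nat).
Variable phi : {linear 'rV[F]_n -> L}.
Local Notation q := #|F|.

Lemma natr_card_L : (q%:R : L) = 0.
Proof. by rewrite -scaler_nat natr_card scale0r. Qed.

Lemma subspace_sum (B : {vspace 'rV[F]_n}) :
  (2 <= \dim B)%N -> \sum_(x | x \in B) (phi x) ^+ q.-1 = 0.
Proof.
move=> dB.
have B0 : B != 0%VS by rewrite -dimv_eq0 -lt0n (leq_trans _ dB).
set u := vpick B.
have u0 : u != 0 by rewrite vpick0.
have uB : u \in B := memv_pick B.
have [i0 ui0] : exists i0, u 0 i0 != 0.
  apply/existsP; apply: contraR u0; rewrite negb_exists => /forallP H.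
  by apply/eqP/rowP => j; rewrite mxE; apply/eqP; move: (H j); rewrite negbK.
set U := (B :\: <[u]>)%VS.
set pi := addv_pi1 B <[u]>.
have sub_uB : (<[u]> <= B)%VS by rewrite -memvE.
have capB : (B :&: <[u]> = <[u]>)%VS by apply/capv_idPr.
have UuB : (U + <[u]> = B)%VS by rewrite /U -{2}(addv_diff_cap B <[u]>) capB.
have dU : (1 <= \dim U)%N.
  move: dB; rewrite -UuB dimv_disjoint_sum ?capv_diff // dim_vline u0.
  by rewrite addn1 ltnS.
have piU x : pi x \in U by apply: memv_pi.
have piid y : y \in U -> pi y = y by move=> Hy; apply: daddv_pi_id => //; apply: capv_diff.
have piu : pi u = 0.
  have := addv_pi1_pi2 (memv_add (mem0v B) (memv_line u)).
  rewrite add0r addv_pi2_id ?memv_line // => H.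
  by apply: (addIr u); rewrite add0r.
have fiber y : y \in U ->
  \sum_(x | (x \in B) && (pi x == y)) (phi x) ^+ q.-1 = \sum_(c : F) (phi (y + c *: u)) ^+ q.-1.
  move=> yU.
  rewrite (reindex_onto (fun c : F => y + c *: u) (fun x => (x - y) 0 i0 / u 0 i0)).
    apply: eq_bigl => c.
    rewrite addrAC subrr add0r mxE mulfK // eqxx andbT.
    rewrite memvD ?memvZ //; last exact: (subvP (diffvSl B <[u]>)).
    by rewrite linearD linearZ /= piu scaler0 addr0 piid //; apply/eqP.
  move=> x /andP[xB /eqP pixy].
  have := addv_pi1_pi2 (w := x) (U := B) (V := <[u]>); rewrite (subvP (addvSl _ _)) // => /(_ isT).
  rewrite -/pi pixy.
  have /vlineP[c ->] := memv_pi2 B <[u]> x.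
  by move=> <-; rewrite addrAC subrr add0r mxE mulfK.
rewrite (partition_big pi (fun y => y \in U)) //=.
rewrite (eq_bigr (fun _ => - (phi u) ^+ q.-1)); last first.
  move=> y yU; rewrite fiber //.
  rewrite (eq_bigr (fun c : F => (phi y + c *: phi u) ^+ q.-1)); last first.
    by move=> c _; rewrite linearD linearZ.
  exact: line_sum.
rewrite sumr_const.
have -> : #|[pred y | y \in U]| = (q ^ \dim U)%N by rewrite -card_vspace.
by rewrite -(subnKC dU) expnS mulnC mulrnA -scaler_nat natr_card scale0r.
Qed.
End SubSum.


Section Points.
Variables (F : finFieldType) (L : fieldExtType F) (n : nat).
Variable phi : {linear 'rV[F]_n -> L}.
Hypothesis phi_inj : injective phi.
Local Notation q := #|F|.

Definition gP (P : {vspace 'rV[F]_n}) : L := (phi (vpick P)) ^+ q.-1.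

Lemma qm1_pos : (q.-1 == 0)%N = false.
Proof. by rewrite -(subnKC (q_gt1 F)). Qed.

Lemma vline_eq (v w : 'rV[F]_n) : v != 0 -> v \in <[w]>%VS -> <[v]>%VS = <[w]>%VS.
Proof.
move=> v0 vw; apply/eqP; rewrite eqEdim -memvE vw /= !dim_vline v0.
by case: (w != 0).
Qed.

Lemma g_line (v : 'rV[F]_n) : v != 0 -> gP <[v]> = (phi v) ^+ q.-1.
Proof.
move=> v0; rewrite /gP.
have /vlineP[c Dc] := memv_pick <[v]>%VS.
have c0 : c != 0.
  apply: contraNneq (v0) => c0; move: Dc; rewrite c0 scale0r => /eqP.
  by rewrite vpick0 -dimv_eq0 dim_vline v0.
by rewrite Dc linearZ exprZn unit_pow // scale1r.
Qed.

Lemma point_line (P : {vspace 'rV[F]_n}) : is_point P -> P = <[vpick P]>%VS.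
Proof.
rewrite /is_point => /eqP dP.
have P0 : vpick P != 0 by rewrite vpick0 -dimv_eq0 dP.
apply/esym/eqP; rewrite eqEdim -memvE memv_pick dP dim_vline P0 //.
Qed.

Lemma g_inj : {in [pred P | is_point P] &, injective gP}.
Proof.
move=> P Q; rewrite !inE => pP pQ; rewrite /gP => E.
have nz (R : {vspace 'rV[F]_n}) : is_point R -> phi (vpick R) != 0.
  move=> pR; apply: contraTneq pR => H.
  have : vpick R = 0 by apply: phi_inj; rewrite H linear0.
  by move/eqP; rewrite vpick0 /is_point => /eqP ->; rewrite dimv0.
set a := phi (vpick P) in E *; set b := phi (vpick Q) in E *.
have a0 := nz _ pP; have b0 := nz _ pQ.
have : a / b \in (1%AS : {subfield L}).
  rewrite Fermat's_little_theorem dimv1 expn1.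
  have -> : (#|F| = q.-1.+1)%N by rewrite prednK // ltnW // q_gt1.
  by rewrite exprS exprMn E -exprMn divff // expr1n mulr1.
move=> /vlineP[c Dc].
have Da : a = phi (c *: vpick Q).
  by rewrite linearZ -/b -[a](divfK b0) Dc mulr_algl.
have : vpick P \in Q by rewrite (phi_inj Da) memvZ // memv_pick.
rewrite memvE -point_line // => sPQ.
apply/eqP; rewrite eqEdim sPQ /=.
by move: pP pQ; rewrite /is_point => /eqP -> /eqP ->.
Qed.

Lemma count_card (T : finType) (P : pred T) : count P (enum T) = #|P|.
Proof. by rewrite cardE /enum_mem size_filter /= count_filter; apply: eq_count => x; rewrite /= !inE andbT. Qed.

Lemma count_line (B : {vspace 'rV[F]_n}) (w : 'rV[F]_n) : w != 0 -> w \in B ->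
  count_mem <[w]>%VS [seq <[v]>%VS | v <- enum 'rV[F]_n & (v != 0) && (v \in B)] = q.-1.
Proof.
move=> w0 wB.
rewrite count_map count_filter.
have -> : count [predI pred1 <[w]>%VS \o (fun v => <[v]>%VS) & fun v => (v != 0) && (v \in B)]
   (enum 'rV[F]_n) = count [pred v | (v \in <[w]>%VS) && (v != 0)] (enum 'rV[F]_n).
  apply: eq_count => v /=. rewrite [in LHS]unfold_in /= [in LHS]unfold_in /=. apply/idP/idP.
    case/andP=> /eqP <- /andP[-> _]; by rewrite memv_line.
  case/andP=> vw v0; rewrite v0 /= (vline_eq v0 vw) eqxx /=.
  by rewrite (subvP _ _ vw) // -memvE.
rewrite count_card.
have := cardD1 0 (mem <[w]>%VS).
rewrite mem0v card_vspace dim_vline w0 expn1 add1n => ->.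
by apply: eq_card => v /=; rewrite !inE andbC.
Qed.

Lemma points_sum (B : {vspace 'rV[F]_n}) :
  (2 <= \dim B)%N -> \sum_(P <- points_of B) gP P = 0.
Proof.
move=> dB; rewrite /points_of.
set t := [seq _ | v <- _ & _].
have E : \sum_(P <- undup t) gP P = - \sum_(P <- undup t) iterop (count_mem P t) +%R (gP P) 0.
  rewrite -sumrN; apply: eq_big_seq => P; rewrite mem_undup => /mapP[v].
  rewrite mem_filter => /andP[/andP[v0 vB] _] ->.
  rewrite count_line // Monoid.iteropE iter_addr_0.
  by rewrite -scaler_nat qm1 scaleN1r opprK.
rewrite E big_undup_iterop_count big_map big_filter.
rewrite (eq_bigr (fun v => (phi v) ^+ q.-1)); last by move=> v /andP[v0 _]; rewrite g_line.
have := subspace_sum phi dB.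
rewrite (bigD1 0) ?mem0v //= linear0 expr0n qm1_pos add0r => H.
rewrite big_enum_cond /=.
apply/eqP; rewrite oppr_eq0; apply/eqP; rewrite -[RHS]H.
by apply: eq_bigl => v; rewrite andbC.
Qed.

End Points.


Module PhiEx.
Import VectorInternalTheory.
Lemma phi_exists (F : finFieldType) (n : nat) (L : fieldExtType F) :
  \dim {:L} = n -> exists phi : {linear 'rV[F]_n -> L}, injective phi.
Proof.
rewrite dimvf => <-.
by exists (r2v : {linear 'rV[F]_(dim L) -> L}); apply: r2v_inj.
Qed.
End PhiEx.
Import PhiEx.

Lemma iso_exists (F : finFieldType) (n : nat) (L : fieldExtType F) (G : finZmodType) :
  (0 < n)%N -> \dim {:L} = n -> elem_abelian_of_order G (#|F| ^ n)%N ->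
  exists h : L -> G, injective h /\ forall x y, h (x + y) = h x + h y.
Proof.
move=> n0 dL [cG [p' [pr' Gp']]].
pose Lf := FinFieldExtType L.
have [p pr_p pcharFp] := finPcharP F.
have pcharL : p \in [pchar Lf] by rewrite pchar_lalg.
have cardL : #|Lf| = (#|F| ^ n)%N.
  by have := card_vspace (fullv : {vspace finvect_type L}); rewrite card_vspacef dL.
have abG : (p'.-abelem [set: G])%g.
  apply/abelemP => //; split; first exact: FinRing.zmod_abelian.
  by move=> x _; rewrite FinRing.zmodXgE Gp'.
have pp' : p = p'.
  have := abelem_pgroup abG; rewrite /pgroup cardsT cG.
  rewrite (card_pprimeChar pcharFp) -expnM pnatX.
  have lg: (0 < logn p #|F|)%N by rewrite -(ltn_exp2l 0 _ (prime_gt1 pr_p)) -(card_pprimeChar pcharFp) q_gt1.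
  rewrite muln_eq0 (gtn_eqF lg) (gtn_eqF n0) /= pnatE // orbF; by move/eqnP.
rewrite -pp' in abG.
have abL : (p.-abelem [set: Lf])%g by apply: pprimeChar_abelem.
have : ([set: Lf] \isog [set: G])%g.
  by rewrite (isog_abelem_card _ abL) abG !cardsT cG cardL eqxx.
case/isogP => f injf imf.
exists f; split.
  by move=> x y E; apply: (injmP injf); rewrite ?inE.
by move=> x y; apply: (morphM f); rewrite inE.
Qed.


Theorem theorem5p1 (F : finFieldType) (n k lam : nat)
  (blocks : seq {vspace 'rV[F]_n}) (G : finZmodType) :
  (2 <= k)%N ->
  @subspace_2design F n k lam blocks ->
  elem_abelian_of_order G (#|F| ^ n)%N ->
  @additive_under F n blocks G.
Proof.
move=> k2 [_ dimB _] EG.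
have [n0|n_gt0] := posnP n.
  subst n.
  have dim0 (P : {vspace 'rV[F]_0}) : \dim P = 0%N.
    by apply/eqP; rewrite -leqn0 (leq_trans (dimvS (subvf P))) // dimvf.
  exists (fun _ => 0); split.
    by move=> P Q; rewrite inE /is_point dim0.
  by move=> B /dimB; rewrite dim0 => k0; rewrite -k0 in k2.
have [L dL] := ext_exists F n_gt0.
have [phi phi_inj] := phi_exists dL.
have [h [h_inj hD]] := iso_exists n_gt0 dL EG.
have h0 : h 0 = 0.
  by apply: (addIr (h 0)); rewrite -hD !add0r.
exists (fun P => h (gP phi P)); split.
  move=> P Q HP HQ /h_inj; exact: g_inj.
move=> B /dimB dB.
rewrite -(big_morph h hD h0) points_sum ?h0 //.
by rewrite dB.
Qed.
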